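(* Let $m\ge 1$ and $Q\ge 0$ be integers, and let $\mathcal{S}_Q=\{s\in\mathbb{N}^m : s_i\le Q \text{ for all } i=1,\dots,m\}$. For a real matrix $A\in\mathbb{R}^{(m+1)\times m}$ and a state $s\in\mathbb{N}^m$, let $\pi(A)(s)=\mathrm{softmax}(As)\in\mathbb{R}^{m+1}$, where $\mathrm{softmax}(z)_j=e^{z_j}/\sum_{k=1}^{m+1}e^{z_k}$; this is a probability distribution over the $m+1$ actions $\{1,\dots,m+1\}$ (action $i\le m$ means serving queue $i$, action $m+1$ means idling). Let the priority policy $\pi_P$ be the deterministic policy which, at a state $s\in\mathbb{N}^m$ with $s\neq 0$, chooses action $j(s)=\min\{i : s_i>0\}$ with probability one, i.e. $\pi_P(s)=e_{j(s)}$, the $j(s)$-th standard unit vector of $\mathbb{R}^{m+1}$. For $k\ge 0$ define $A_k\in\mathbb{R}^{(m+1)\times m}$ by $(A_k)_{ii}=(Q+1)^{m-i+1}k+1$ for $i=1,\dots,m$ and $(A_k)_{il}=1$ for all other entries (including the whole last row $i=m+1$), and let $\pi_k=\pi(A_k)$. Then: (1) $\pi_0$ is the uniform policy: $\pi_0(s)=\frac{1}{m+1}(1,\dots,1)^\top$ for every $s\in\mathbb{N}^m$. (2) For every $s\in\mathcal{S}_Q$ with $s\neq 0$, $\pi_k(s)\to\pi_P(s)$ as $k\to\infty$. (3) There is no sequence of matrices $A'_k\in\mathbb{R}^{(m+1)\times m}$ with uniformly bounded entries (i.e. $\sup_k\max_{i,l}|(A'_k)_{il}|<\infty$) such that $\pi(A'_k)(s)\to\pi_P(s)$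 as $k\to\infty$ for every $s\in\mathcal{S}_Q$ with $s\neq 0$.
   Context: Setting: a single-server system with $m$ parallel queues; the observable state $s\in\mathbb{N}^m$ records the number of jobs in each queue, and queues are indexed so that $c_1\mu_1\ge c_2\mu_2\ge\dots\ge c_m\mu_m$ (holding cost $c_i$, service rate $\mu_i$), so the priority ($c$-$\mu$) policy serves the lowest-indexed nonempty queue. Policies are parameterized linearly through a softmax as in the claim. *)

(* Defs.v *)
From HB Require Import structures.
From mathcomp Require Import all_boot all_order all_algebra.
From mathcomp Require Import all_classical all_reals all_analysis.
Set Implicit Arguments. Unset Strict Implicit. Unset Printing Implicit Defensive.
Import Order.TTheory GRing.Theory Num.Theory.
Local Open Scope ring_scope.

(* Indexing is 0-based: queues are 'I_m (paper's queue i is our i-1),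
   actions are 'I_m.+1, the last action ord_max (paper's m+1) is idling.
   A state is s : 'I_m -> nat. *)

Definition linscore (R : realType) (m : nat) (A : 'M[R]_(m.+1, m))
  (s : 'I_m -> nat) (j : 'I_m.+1) : R :=
  \sum_(l < m) A j l * (s l)%:R.

Definition softmax_policy (R : realType) (m : nat) (A : 'M[R]_(m.+1, m))
  (s : 'I_m -> nat) (j : 'I_m.+1) : R :=
  expR (linscore A s j) / \sum_(k < m.+1) expR (linscore A s k).

Definition in_SQ (m Q : nat) (s : 'I_m -> nat) : Prop := forall i, (s i <= Q)%N.

Definition nonzero_state (m : nat) (s : 'I_m -> nat) : Prop := exists i, s i <> 0%N.

Definition is_first_nonempty (m : nat) (s : 'I_m -> nat) (j : 'I_m.+1) : bool :=
  [exists i : 'I_m, [&& nat_of_ord i == nat_of_ord j, (0 < s i)%N &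
     [forall i' : 'I_m, (nat_of_ord i' < nat_of_ord j)%N ==> (s i' == 0%N)]]].

Definition priority_policy (R : realType) (m : nat) (s : 'I_m -> nat)
  (j : 'I_m.+1) : R :=
  if is_first_nonempty s j then 1 else 0.

(* A_k: diagonal entry (paper's i = our i+1) (Q+1)^(m-i+1) k + 1, all others 1 *)
Definition Ak (R : realType) (m Q : nat) (k : nat) : 'M[R]_(m.+1, m) :=
  \matrix_(i < m.+1, l < m)
    if nat_of_ord i == nat_of_ord l
    then ((Q.+1) ^ (m - i))%:R * k%:R + 1
    else 1.

(* Main.v *)
Require Import Defs.
From HB Require Import structures.
From mathcomp Require Import all_boot all_order all_algebra.
From mathcomp Require Import all_classical all_reals all_analysis.
From mathcomp Require Import ring lra zify.
Import Order.TTheory GRing.Theory Num.Theory numFieldTopology.Exports numFieldNormedType.Exports.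
Local Open Scope ring_scope.
Local Open Scope classical_set_scope.

Lemma sm_generic (R : realType) (N : nat) (f : nat -> 'I_N -> R) (S : nat -> R)
  (c : 'I_N -> R) (j0 : 'I_N) :
  (forall k, k != j0 -> c k < c j0) ->
  (forall n k, f n k = expR (S n + n%:R * c k) /
                       \sum_(k' < N) expR (S n + n%:R * c k')) ->
  (forall k, k != j0 -> (fun n => f n k) @ \oo --> (0:R)) /\
  ((fun n => f n j0) @ \oo --> (1:R)).
Proof.
move=> hc hf.
have Dge : forall n, expR (S n + n%:R * c j0) <= \sum_(k' < N) expR (S n + n%:R * c k').
  move=> n; rewrite (bigD1 j0) //= lerDl sumr_ge0 // => i _; exact: expR_ge0.
have Dgt : forall n, 0 < \sum_(k' < N) expR (S n + n%:R * c k').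
  by move=> n; apply: lt_le_trans (Dge n); exact: expR_gt0.
have h0 : forall k, k != j0 -> (fun n => f n k) @ \oo --> (0:R).
  move=> k hk.
  apply: (@squeeze_cvgr _ _ _ _ (cst 0) (fun n => expR (c k - c j0) ^+ n)).
  - apply: nearW => n; rewrite hf; apply/andP; split.
      by rewrite divr_ge0 // ?expR_ge0 // ltW.
    rewrite ler_pdivrMr // -expRM_natl.
    apply: le_trans (ler_wpM2l (expR_ge0 _) (Dge n)).
    by rewrite -expRD ler_expR; lra.
  - exact: cvg_cst.
  - apply: cvg_expr; rewrite ger0_norm ?expR_ge0 // expR_lt1 subr_lt0; exact: hc.
split => //.
have sum1 : forall n, \sum_(k < N) f n k = 1.
  move=> n; under eq_bigr do rewrite hf; rewrite -mulr_suml divff //.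
  by rewrite gt_eqF.
have -> : (fun n => f n j0) = (fun n => 1 - \sum_(k < N | k != j0) f n k).
  apply/funext => n; rewrite -(sum1 n) (bigD1 j0) //=; ring.
suff H : (fun n => 1 - \sum_(k < N | k != j0) f n k) @ \oo --> (1 - \sum_(k < N | k != j0) (0:R)).
  by rewrite big1 // subr0 in H.
have -> : (fun n => 1 - \sum_(k < N | k != j0) f n k) = (fun=> 1) - (fun n => \sum_(k < N | k != j0) f n k) by [].
apply: cvgB; first exact: cvg_cst.
exact: (cvg_big (@add_continuous R) _ h0).
Qed.

Definition cn (m Q : nat) (s : 'I_m -> nat) (j : 'I_m.+1) : nat :=
  \sum_(l < m) (if nat_of_ord j == nat_of_ord l then (Q.+1) ^ (m - j) * s l else 0)%N.
Arguments cn {m}.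

Lemma lin_Ak (R : realType) m Q k s j :
  linscore (Ak R m Q k) s j = \sum_(l < m) (s l)%:R + k%:R * (cn Q s j)%:R.
Proof.
rewrite /linscore /cn natr_sum mulr_sumr -big_split; apply: eq_bigr => l _ /=.
rewrite mxE; case: eqP => _; last by rewrite mul1r mulr0 addr0.
rewrite natrM; ring.
Qed.

Lemma cn_in m Q s (k : 'I_m.+1) (hk : (k < m)%N) :
  cn Q s k = ((Q.+1) ^ (m - k) * s (Ordinal hk))%N.
Proof.
rewrite /cn (bigD1 (Ordinal hk)) //= eqxx big1 ?addn0 // => l hl.
case: eqP => // e; move: hl; suff -> : l = Ordinal hk by rewrite eqxx.
by apply: val_inj; rewrite /= e.
Qed.

Lemma cn_out m Q s (k : 'I_m.+1) (hk : ~~ (k < m)%N) : cn Q s k = 0%N.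
Proof.
rewrite /cn big1 // => l _; case: eqP => // e.
by move: hk; rewrite e ltn_ord.
Qed.

Lemma lin_bound (R : realType) m (A : 'M[R]_(m.+1, m)) C s j :
  (forall i l, `|A i l| <= C) -> `|linscore A s j| <= C * \sum_(l < m) (s l)%:R.
Proof.
move=> hC; rewrite /linscore mulr_sumr.
apply: le_trans (ler_norm_sum _ _ _) _; apply: ler_sum => l _.
by rewrite normrM (ger0_norm (ler0n _ _)); apply: ler_wpM2r.
Qed.

Lemma sm_lower (R : realType) m (A : 'M[R]_(m.+1, m)) B s j :
  (forall j, `|linscore A s j| <= B) ->
  expR (- B) / ((m.+1)%:R * expR B) <= softmax_policy A s j.
Proof.
move=> hB; rewrite /softmax_policy.
have Dgt : 0 < \sum_(k < m.+1) expR (linscore A s k).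
  by rewrite (bigD1 ord0) //= ltr_pwDl ?expR_gt0 // sumr_ge0 // => i _; exact: expR_ge0.
have Dle : \sum_(k < m.+1) expR (linscore A s k) <= (m.+1)%:R * expR B.
  apply: le_trans (_ : \sum_(k < m.+1) expR B <= _).
    apply: ler_sum => k _; rewrite ler_expR; have := hB k; rewrite ler_norml.
    by case/andP.
  by rewrite sumr_const card_ord mulr_natl.
rewrite ler_pdivlMr //.
apply: le_trans (_ : expR (- B) / ((m.+1)%:R * expR B) * ((m.+1)%:R * expR B) <= _).
  by apply: ler_wpM2l => //; rewrite divr_ge0 ?expR_ge0 // mulr_ge0 ?expR_ge0.
rewrite divfK; last by rewrite mulf_neq0 ?pnatr_eq0 // gt_eqF ?expR_gt0.
rewrite ler_expR; have := hB j; rewrite ler_norml; case/andP => //.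
Qed.

Lemma key_ineq m Q (s : 'I_m -> nat) (hSQ : in_SQ Q s) (i : 'I_m)
  (hi : (0 < s i)%N) (hmin : forall i', (0 < s i')%N -> (i <= i')%N)
  (k : 'I_m.+1) : k != widen_ord (leqnSn m) i -> (cn Q s k < cn Q s (widen_ord (leqnSn m) i))%N.
Proof.
move=> hk.
have hi' : (widen_ord (leqnSn m) i < m)%N by rewrite /= ltn_ord.
rewrite (cn_in _ _ _ _ hi') /=.
have -> : Ordinal hi' = i by apply: val_inj.
have P0 : (0 < Q.+1 ^ (m - i))%N by rewrite expn_gt0.
case hkm: (k < m)%N; last first.
  by rewrite cn_out ?hkm // muln_gt0 P0 hi.
rewrite (cn_in _ _ _ _ hkm).
have hne : (nat_of_ord k != nat_of_ord i).
  by apply: contra hk => /eqP e; apply/eqP; apply: val_inj.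
case: (ltngtP k i) => hki.
- have -> : s (Ordinal hkm) = 0%N.
    case: (posnP (s (Ordinal hkm))) => // /hmin /= h; lia.
  by rewrite muln0 muln_gt0 P0 hi.
- have h1 := hSQ (Ordinal hkm).
  have h2 : (Q.+1 ^ (m - k) * Q.+1 <= Q.+1 ^ (m - i))%N.
    rewrite -expnSr leq_pexp2l //; have := ltn_ord i; lia.
  have h3 : (0 < Q.+1 ^ (m - k))%N by rewrite expn_gt0.
  move: h1 h2 h3 hi; set p := (Q.+1 ^ (m - k))%N; set P := (Q.+1 ^ (m - i))%N.
  move=> h1 h2 h3 h4; nia.
- by move/eqP: hne; lia.
Qed.

Theorem theorem2 (R : realType) (m Q : nat) (hm : (1 <= m)%N) :
  (* (1) pi_0 is uniform *)
  (forall (s : 'I_m -> nat) (j : 'I_m.+1),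
      softmax_policy (Ak R m Q 0) s j = 1 / (m.+1)%:R)
  /\
  (* (2) pi_k(s) -> pi_P(s) for nonzero s in S_Q *)
  (forall s : 'I_m -> nat, in_SQ Q s -> nonzero_state s ->
     forall j : 'I_m.+1,
       ((fun k : nat => softmax_policy (Ak R m Q k) s j) : nat -> R) @ \oo
         --> (priority_policy R s j : R))
  /\
  (* (3) no uniformly bounded sequence achieves this (needs Q >= 1, see NOTES) *)
  ((1 <= Q)%N ->
   ~ exists A' : nat -> 'M[R]_(m.+1, m),
       (exists C : R, forall k (i : 'I_m.+1) (l : 'I_m), `|A' k i l| <= C) /\
       (forall s : 'I_m -> nat, in_SQ Q s -> nonzero_state s ->
          forall j : 'I_m.+1,
            ((fun k : nat => softmax_policy (A' k) s j) : nat -> R) @ \oo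
              --> (priority_policy R s j : R))).
Proof.
split.
  move=> s j; rewrite /softmax_policy.
  under eq_bigr do rewrite lin_Ak mul0r addr0.
  rewrite lin_Ak mul0r addr0 sumr_const card_ord -[_ *+ m.+1]mulr_natr.
  have hE := expR_gt0 (\sum_(l < m) (s l)%:R : R).
  rewrite invfM mulrA divff ?gt_eqF // ?mul1r ?div1r.
split.
  move=> s hSQ [i0 hi0] j.
  have hpos : (0 < s i0)%N by rewrite lt0n; apply/eqP.
  have [i hi hmin] := @arg_minnP _ i0 (fun i => 0 < s i)%N (fun i : 'I_m => nat_of_ord i) hpos.
  set j0 := widen_ord (leqnSn m) i.
  have first_j0 : is_first_nonempty s j0.
    apply/existsP; exists i; rewrite eqxx hi /=; apply/forallP => i'.
    apply/implyP => lt; apply/eqP.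
    case: (posnP (s i')) => // /hmin h; move: lt; rewrite /= ltnNge h.
    by [].
  have uniq_first : forall j, is_first_nonempty s j -> j = j0.
    move=> j' /existsP [i' /and3P [/eqP e hs /forallP hf]].
    apply: val_inj; rewrite /= -e; apply/eqP; rewrite eqn_leq (hmin _ hs) andbT.
    rewrite leqNgt; apply/negP => lt.
    have := hf i; rewrite -e lt /= => /eqP h; move: hi; rewrite h.
    by [].
  have hc : forall k, k != j0 -> ((cn Q s k)%:R : R) < (cn Q s j0)%:R.
    by move=> k hk; rewrite ltr_nat; exact: key_ineq.
  have hf : forall n k, softmax_policy (Ak R m Q n) s k =
     expR (\sum_(l < m) (s l)%:R + n%:R * (cn Q s k)%:R) /
       \sum_(k' < m.+1) expR (\sum_(l < m) (s l)%:R + n%:R * (cn Q s k')%:R).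
    by move=> n k; rewrite /softmax_policy; under eq_bigr do rewrite lin_Ak; rewrite lin_Ak.
  have [h0 h1] := @sm_generic R m.+1 (fun k j => softmax_policy (Ak R m Q k) s j)
    (fun _ => \sum_(l < m) (s l)%:R) (fun j => (cn Q s j)%:R) j0 hc hf.
  rewrite /priority_policy; case: (eqVneq j j0) => [-> | hj].
    by rewrite first_j0; exact: h1.
  case: ifP => [/uniq_first e|_]; first by move: hj; rewrite e eqxx.
  exact: h0.
move=> hQ [A' [[C hC] hconv]].
pose s : 'I_m -> nat := fun l => if nat_of_ord l == 0%N then 1%N else 0%N.
have hSQ : in_SQ Q s by move=> l; rewrite /s; case: ifP.
have hnz : nonzero_state s by exists (Ordinal hm); rewrite /s /=.
have := hconv s hSQ hnz ord_max.
have -> : priority_policy R s ord_max = 0.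
  rewrite /priority_policy; case: ifP => // /existsP [i /and3P [/eqP e _ _]].
  by have := ltn_ord i; rewrite e /= ltnn.
set B := C * \sum_(l < m) (s l)%:R.
set d := expR (- B) / ((m.+1)%:R * expR B).
have hd : 0 < d by rewrite divr_gt0 ?expR_gt0 // mulr_gt0 ?expR_gt0.
move=> /cvgr0_norm_lt /(_ _ hd) [N _ HN].
have := HN N (leqnn N); rewrite ltNge => /negP; apply.
have hlow : d <= softmax_policy (A' N) s ord_max.
  by apply: sm_lower => j; apply: lin_bound.
by apply: le_trans hlow _; exact: ler_norm.
Qed.
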